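(* Consider BALM applied to $\min_{x\in\mathcal{X}} f(x)$ s.t. $Ax=b$ (with $\Lambda=\mathbb{R}^m$) or s.t. $Ax\le b$ (with $\Lambda=\mathbb{R}^m_+$), with parameters $\eta_k>0$, and define for $T\ge1$ $$\tilde x_T=\frac{\sum_{k=0}^{T-1}\eta_k x_{k+1}}{\sum_{k=0}^{T-1}\eta_k},\qquad \tilde\lambda_T=\frac{\sum_{k=0}^{T-1}\eta_k \lambda_{k+1}}{\sum_{k=0}^{T-1}\eta_k}.$$ Then for all $x\in\mathcal{X}$, $\lambda\in\Lambda$, $$L(\tilde x_T,\lambda)-L(x,\tilde\lambda_T)\le\frac{D_h(\lambda,\lambda_0)}{\sum_{k=0}^{T-1}\eta_k},$$ and, if $x^*$ is an optimal solution of the primal problem, for all $\lambda\in\Lambda$, $$f(\tilde x_T)-f(x^* )+\lambda^\top(A\tilde x_T-b)\le\frac{D_h(\lambda,\lambda_0)}{\sum_{k=0}^{T-1}\eta_k}.$$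
   Context: $f$ is closed, convex (and coercive), $\mathcal{X}\subseteq\mathbb{R}^n$ closed convex, $A\in\mathbb{R}^{m\times n}$, $b\in\mathbb{R}^m$, $L(x,\lambda)=f(x)+\lambda^\top(Ax-b)$. $h:\Lambda\to\mathbb{R}$ is proper, coercive, strictly convex and continuously differentiable on $\Lambda$; $D_h(\lambda,\tilde\lambda)=h(\lambda)-h(\tilde\lambda)-\nabla h(\tilde\lambda)^\top(\lambda-\tilde\lambda)$. BALM: given $\lambda_0\in\Lambda$, for $k\ge0$, $(x_{k+1},\lambda_{k+1})\in\mathcal{X}\times\Lambda$ is a saddle point on $\mathcal{X}\times\Lambda$ (min in $x$, max in $\lambda$) of $L(x,\lambda)-\frac1{\eta_k}D_h(\lambda,\lambda_k)$ (assumed to exist). *)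

(* Defs.v *)
From mathcomp Require Import all_boot.
From Stdlib Require Import Reals.
Set Implicit Arguments.
Unset Strict Implicit.
Open Scope R_scope.

Definition vec (n : nat) := 'I_n -> R.
Definition mat (m n : nat) := 'I_m -> 'I_n -> R.

Definition dot (n : nat) (u v : vec n) : R := \big[Rplus/0]_(i < n) (u i * v i).
Definition vnorm (n : nat) (u : vec n) : R := sqrt (dot u u).
Definition vsub (n : nat) (u v : vec n) : vec n := fun i => u i - v i.
Definition mulv (m n : nat) (A : mat m n) (x : vec n) : vec m :=
  fun i => \big[Rplus/0]_(j < n) (A i j * x j).

Definition vconvex_set (n : nat) (X : vec n -> Prop) : Prop :=
  forall x y t, X x -> X y -> 0 <= t <= 1 ->
    X (fun i => t * x i + (1 - t) * y i).
Definition vclosed_set (n : nat) (X : vec n -> Prop) : Prop :=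
  forall x, (forall eps, 0 < eps -> exists y, X y /\ vnorm (vsub y x) < eps) -> X x.

Definition convex_fun (n : nat) (f : vec n -> R) : Prop :=
  forall x y t, 0 <= t <= 1 ->
    f (fun i => t * x i + (1 - t) * y i) <= t * f x + (1 - t) * f y.
(* closed = lower semicontinuous (f real valued) *)
Definition lsc_fun (n : nat) (f : vec n -> R) : Prop :=
  forall x eps, 0 < eps -> exists delta, 0 < delta /\
    forall y, vnorm (vsub y x) < delta -> f x - eps < f y.
Definition coercive_on (n : nat) (S : vec n -> Prop) (f : vec n -> R) : Prop :=
  forall M, exists r, forall x, S x -> r < vnorm x -> M < f x.
Definition strictly_convex_on (n : nat) (S : vec n -> Prop) (f : vec n -> R) : Prop :=
  forall x y t, S x -> S y -> x <> y -> 0 < t < 1 ->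
    f (fun i => t * x i + (1 - t) * y i) < t * f x + (1 - t) * f y.
Definition gradient_on (n : nat) (S : vec n -> Prop) (h : vec n -> R)
  (g : vec n -> vec n) : Prop :=
  forall l, S l -> forall eps, 0 < eps -> exists delta, 0 < delta /\
    forall mu, S mu -> vnorm (vsub mu l) < delta ->
      Rabs (h mu - h l - dot (g l) (vsub mu l)) <= eps * vnorm (vsub mu l).
Definition vcontinuous_on (n : nat) (S : vec n -> Prop) (g : vec n -> vec n) : Prop :=
  forall l, S l -> forall eps, 0 < eps -> exists delta, 0 < delta /\
    forall mu, S mu -> vnorm (vsub mu l) < delta -> vnorm (vsub (g mu) (g l)) < eps.

Definition Dh (m : nat) (h : vec m -> R) (gh : vec m -> vec m) (l lt : vec m) : R :=
  h l - h lt - dot (gh lt) (vsub l lt).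

Definition Lag (m n : nat) (f : vec n -> R) (A : mat m n) (b : vec m)
  (x : vec n) (l : vec m) : R := f x + dot l (vsub (mulv A x) b).

(* ineq = false : constraint Ax = b, Lambda = R^m;
   ineq = true  : constraint Ax <= b, Lambda = R^m_+ *)
Definition Lambda (m : nat) (ineq : bool) (l : vec m) : Prop :=
  if ineq then forall i, 0 <= l i else True.
Definition feasible (m n : nat) (ineq : bool) (A : mat m n) (b : vec m) (x : vec n) : Prop :=
  if ineq then forall i, mulv A x i <= b i else forall i, mulv A x i = b i.
Definition primal_optimal (m n : nat) (ineq : bool) (f : vec n -> R) (X : vec n -> Prop)
  (A : mat m n) (b : vec m) (xs : vec n) : Prop :=
  X xs /\ feasible ineq A b xs /\
  forall x, X x -> feasible ineq A b x -> f xs <= f x.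

(* (x_{k+1}, lambda_{k+1}) is a saddle point on X x Lambda of
   L(x,lambda) - (1/eta_k) D_h(lambda, lambda_k) *)
Definition BALM_step (m n : nat) (ineq : bool) (f : vec n -> R) (X : vec n -> Prop)
  (A : mat m n) (b : vec m) (h : vec m -> R) (gh : vec m -> vec m)
  (eta : R) (lk : vec m) (x1 : vec n) (l1 : vec m) : Prop :=
  let Phi := fun x l => Lag f A b x l - / eta * Dh h gh l lk in
  X x1 /\ Lambda ineq l1 /\
  (forall x l, X x -> Lambda ineq l -> Phi x1 l <= Phi x1 l1 /\ Phi x1 l1 <= Phi x l1).

Definition eta_sum (eta : nat -> R) (T : nat) : R := \big[Rplus/0]_(k < T) eta k.
Definition wavg (p : nat) (eta : nat -> R) (z : nat -> vec p) (T : nat) : vec p :=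
  fun i => (\big[Rplus/0]_(k < T) (eta k * z k.+1 i)) / eta_sum eta T.

(* Main.v *)
Require Import Defs.
From HB Require Import structures.
From mathcomp Require Import all_boot.
From Stdlib Require Import Reals Lra Psatz Classical FunctionalExtensionality.
Set Implicit Arguments.
Unset Strict Implicit.
Open Scope R_scope.

Lemma Ra_assoc : associative Rplus. Proof. move=>*; ring. Qed.
Lemma Rm_assoc : associative Rmult. Proof. move=>*; ring. Qed.
HB.instance Definition _ := Monoid.isComLaw.Build R 0 Rplus Ra_assoc Rplus_comm Rplus_0_l.
HB.instance Definition _ := Monoid.isComLaw.Build R 1 Rmult Rm_assoc Rmult_comm Rmult_1_l.
HB.instance Definition _ := Monoid.isMulLaw.Build R 0 Rmult Rmult_0_l Rmult_0_r.
HB.instance Definition _ := Monoid.isAddLaw.Build R Rmult Rplus Rmult_plus_distr_r Rmult_plus_distr_l.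

Lemma sumB n (F G : 'I_n -> R) :
  \big[Rplus/0]_(i<n) (F i - G i) = \big[Rplus/0]_(i<n) F i - \big[Rplus/0]_(i<n) G i.
Proof.
rewrite /Rminus big_split /=; congr (_ + _).
rewrite (eq_bigr (fun i => -1 * G i)); last by move=> i _; ring.
rewrite -big_distrr /=; ring.
Qed.

Lemma sum_le n (F G : 'I_n -> R) : (forall i, F i <= G i) ->
  \big[Rplus/0]_(i<n) F i <= \big[Rplus/0]_(i<n) G i.
Proof. move=> H; apply: big_ind2 => //; [lra | move=>*; lra]. Qed.

Lemma abs_split z c : Rabs z <= c -> -c <= z <= c.
Proof. split_Rabs; lra. Qed.

Lemma le_eps a b : (forall eps, 0 < eps -> a <= b + eps) -> a <= b.
Proof.
move=> H; apply Rnot_lt_le => Hlt.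
have := H ((a - b)/2) ltac:(lra); lra.
Qed.

Lemma dot_comm n (u v : vec n) : dot u v = dot v u.
Proof. by apply eq_bigr => i _; ring. Qed.

Lemma dot_sub_r n (a u w : vec n) : dot a (vsub u w) = dot a u - dot a w.
Proof. rewrite /dot /vsub -sumB; apply eq_bigr => i _; ring. Qed.

Lemma dot_sub_l n (a u w : vec n) : dot (vsub u w) a = dot u a - dot w a.
Proof. rewrite /dot /vsub -sumB; apply eq_bigr => i _; ring. Qed.

Lemma dot_scale_r n (a u : vec n) t : dot a (fun i => t * u i) = t * dot a u.
Proof. rewrite /dot big_distrr /=; apply eq_bigr => i _; ring. Qed.

Lemma dot_ge0 n (u : vec n) : 0 <= dot u u.
Proof. apply: big_ind => //; [lra | move=>*; lra | move=> i _; nra]. Qed.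

Lemma vnorm_ge0 n (u : vec n) : 0 <= vnorm u.
Proof. apply sqrt_pos. Qed.

Lemma vnorm_scale n (u : vec n) t : 0 <= t -> vnorm (fun i => t * u i) = t * vnorm u.
Proof.
move=> Ht; rewrite /vnorm.
have -> : dot (fun i => t * u i) (fun i => t * u i) = (t * t) * dot u u.
  by rewrite /dot big_distrr /=; apply eq_bigr => i _; ring.
rewrite sqrt_mult; [|nra|apply dot_ge0].
by rewrite sqrt_square.
Qed.

Lemma grad_approx ineq m (h : vec m -> R) gh (p q : vec m) :
  gradient_on (Lambda ineq) h gh -> Lambda ineq p -> Lambda ineq q ->
  forall eps, 0 < eps -> exists t, 0 < t < 1 /\
  Rabs (h (fun i => p i + t * (q i - p i)) - h p - t * dot (gh p) (vsub q p)) <= t * eps.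
Proof.
move=> G Hp Hq eps He.
set N := vnorm (vsub q p).
have HN : 0 <= N by apply vnorm_ge0.
have He' : 0 < eps / (N + 1) by apply Rdiv_lt_0_compat; lra.
case: (G p Hp _ He') => d [Hd Hmu].
set t := Rmin (1/2) (d / (2 * (N + 1))).
have Ht0 : 0 < t.
  apply Rmin_glb_lt; [lra | apply Rdiv_lt_0_compat; lra].
have Ht1 : t <= 1/2 by apply Rmin_l.
have Ht2 : t <= d / (2 * (N + 1)) by apply Rmin_r.
exists t; split; first lra.
set mu := fun i => p i + t * (q i - p i).
have Emu : vsub mu p = (fun i => t * vsub q p i).
  by apply functional_extensionality => i; rewrite /mu /vsub; ring.
have Lmu : Lambda ineq mu.
  move: Hp Hq; rewrite /Lambda /mu; clear G Hmu; case: ineq => // Hp Hq i.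
  have := Hp i; have := Hq i; nra.
have Nmu : vnorm (vsub mu p) = t * N by rewrite Emu vnorm_scale //; lra.
have E1 : d / (2 * (N + 1)) * (2 * (N + 1)) = d by field; lra.
have Hlt : t * N < d by nra.
have := Hmu mu Lmu; rewrite Nmu; rewrite -/N in Hlt => H.
have {H} H := H Hlt.
rewrite Emu dot_scale_r in H.
apply: Rle_trans H _.
have E2 : eps / (N + 1) * (N + 1) = eps by field; lra.
nra.
Qed.

Lemma Dh_ge0 ineq m (h : vec m -> R) gh (p q : vec m) :
  strictly_convex_on (Lambda ineq) h -> gradient_on (Lambda ineq) h gh ->
  Lambda ineq p -> Lambda ineq q -> 0 <= Dh h gh q p.
Proof.
move=> SC G Hp Hq.
case: (classic (q = p)) => [->|Hne].
  rewrite /Dh dot_sub_r; lra.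
rewrite /Dh.
suff: dot (gh p) (vsub q p) <= h q - h p by lra.
apply le_eps => eps He.
case: (@grad_approx ineq m h gh p q G Hp Hq _ He) => t [Ht Ha].
have := SC q p t Hq Hp Hne Ht.
have -> : (fun i => t * q i + (1 - t) * p i) = (fun i => p i + t * (q i - p i)).
  by apply functional_extensionality => i; ring.
move/abs_split: Ha => Ha Hs.
have : t * (dot (gh p) (vsub q p) - (h q - h p + eps)) < 0 by nra.
move=> H; nra.
Qed.

Lemma step_ineq m n ineq (f : vec n -> R) X (A : mat m n) b (h : vec m -> R) gh
  e (lk : vec m) x1 l1 xx l :
  strictly_convex_on (Lambda ineq) h -> gradient_on (Lambda ineq) h gh ->
  0 < e -> Lambda ineq lk ->
  BALM_step ineq f X A b h gh e lk x1 l1 -> X xx -> Lambda ineq l ->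
  e * (Lag f A b x1 l - Lag f A b xx l1) <= Dh h gh l lk - Dh h gh l l1.
Proof.
move=> SC G He Hlk [HX [HL Hs]] Hxx Hl.
set c := vsub (mulv A x1) b.
set Dc := dot (vsub l l1) c.
have Key : e * Dc + dot (gh lk) (vsub l l1) <= dot (gh l1) (vsub l l1).
  apply le_eps => eps Heps.
  case: (@grad_approx ineq m h gh l1 l G HL Hl _ Heps) => t [Ht Ha].
  move/abs_split: Ha => Ha.
  set mu := fun i => l1 i + t * (l i - l1 i).
  have Emu : vsub mu l1 = (fun i => t * vsub l l1 i).
    by apply functional_extensionality => i; rewrite /mu /vsub; ring.
  have Lmu : Lambda ineq mu.
    move: HL Hl; rewrite /Lambda /mu; clear -Ht; case: ineq => // Hp Hq i.
    have := Hp i; have := Hq i; nra.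
  have H1 := (Hs xx mu Hxx Lmu).1; simpl in H1.
  have EL : Lag f A b x1 mu - Lag f A b x1 l1 = t * Dc.
    transitivity (dot (vsub mu l1) c); first by rewrite /Lag dot_sub_l /c; ring.
    by rewrite Emu dot_comm dot_scale_r dot_comm.
  have ED : Dh h gh mu lk - Dh h gh l1 lk
          = h mu - h l1 - t * dot (gh lk) (vsub l l1).
    rewrite /Dh -(dot_scale_r (gh lk) (vsub l l1) t) -Emu !dot_sub_r; ring.
  set r := h mu - h l1.
  have H2 : t * Dc - / e * (r - t * dot (gh lk) (vsub l l1)) <= 0.
    rewrite /r -ED -EL; lra.
  have H3 : e * t * Dc - (r - t * dot (gh lk) (vsub l l1)) <= 0.
    have E : e * (t * Dc - / e * (r - t * dot (gh lk) (vsub l l1)))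
           = e * t * Dc - (r - t * dot (gh lk) (vsub l l1)) by field; lra.
    rewrite -E; nra.
  have H4 : t * (e * Dc + dot (gh lk) (vsub l l1) - dot (gh l1) (vsub l l1) - eps) <= 0.
    rewrite /r /mu in H3; nra.
  nra.
have H2 := (Hs xx l Hxx Hl).2; simpl in H2.
have ELL : Lag f A b x1 l - Lag f A b x1 l1 = Dc by rewrite /Lag /Dc /c dot_sub_l; ring.
have Dpos := @Dh_ge0 ineq m h gh lk l1 SC G Hlk HL.
have EDh : Dh h gh l lk - Dh h gh l l1
         = Dh h gh l1 lk + dot (gh l1) (vsub l l1) - dot (gh lk) (vsub l l1).
  rewrite /Dh !dot_sub_r; ring.
rewrite EDh.
have : e * (Lag f A b x1 l - Lag f A b xx l1) = e * Dc + e * (Lag f A b x1 l1 - Lag f A b xx l1).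
  rewrite -ELL; ring.
move=> ->.
have : Lag f A b x1 l1 - Lag f A b xx l1 <= 0 by lra.
nra.
Qed.

Lemma eta_sum_pos (eta : nat -> R) T : (forall k, 0 < eta k) -> (0 < T)%nat -> 0 < eta_sum eta T.
Proof.
move=> He; case: T => // T _; rewrite /eta_sum big_ord_recr /=.
have : 0 <= \big[Rplus/0]_(i < T) eta i.
  apply: big_ind => [|x y Hx Hy|i _]; [lra|lra|have := He i; lra].
move=> H0; exact: Rplus_le_lt_0_compat H0 (He T).
Qed.

Lemma dot_wavg p (u : vec p) eta (z : nat -> vec p) T :
  dot u (wavg eta z T) = (\big[Rplus/0]_(k<T) (eta k * dot u (z k.+1))) / eta_sum eta T.
Proof.
rewrite /dot /wavg /Rdiv big_distrl /=.
rewrite (eq_bigr (fun i => \big[Rplus/0]_(k<T) (u i * (eta k * z k.+1 i) * / eta_sum eta T))); last first.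
  move=> i _; rewrite -big_distrl -big_distrr /=; ring.
rewrite exchange_big /=; apply eq_bigr => k _.
rewrite big_distrr big_distrl /=; apply eq_bigr => i _; ring.
Qed.

Lemma mulv_wavg m n (A : mat m n) (b : vec m) eta (x : nat -> vec n) T :
  eta_sum eta T <> 0 ->
  vsub (mulv A (wavg eta x T)) b = wavg eta (fun k => vsub (mulv A (x k)) b) T.
Proof.
move=> HS; apply functional_extensionality => i.
rewrite /vsub.
change (mulv A (wavg eta x T) i) with (dot (A i) (wavg eta x T)).
rewrite dot_wavg /wavg.
rewrite [in RHS](eq_bigr (fun k : 'I_T => eta k * mulv A (x k.+1) i - eta k * b i)); last first.
  by move=> k _ /=; rewrite /vsub; ring.
rewrite sumB -big_distrl /=.
change (\big[Rplus/0]_(k < T) eta k) with (eta_sum eta T).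
have -> : \big[Rplus/0]_(k < T) (eta k * dot (A i) (x k.+1))
        = \big[Rplus/0]_(k < T) (eta k * mulv A (x k.+1) i) by [].
field; exact HS.
Qed.

Lemma jensen n (f : vec n -> R) eta (x : nat -> vec n) T :
  convex_fun f -> (forall k, 0 < eta k) -> (1 <= T)%nat ->
  eta_sum eta T * f (wavg eta x T) <= \big[Rplus/0]_(k<T) (eta k * f (x k.+1)).
Proof.
move=> Cf He; case: T => // T _; elim: T => [|T IH].
  have -> : wavg eta x 1%nat = x 1%nat.
    apply functional_extensionality => i; rewrite /wavg /eta_sum !big_ord1 /=.
    field; have := He 0%nat; lra.
  rewrite /eta_sum !big_ord1 /=; lra.
have S1p := @eta_sum_pos eta T.+1 He (ltn0Sn T).
set S1 := eta_sum eta T.+1 in IH S1p *.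
have ES2 : eta_sum eta T.+2 = S1 + eta T.+1 by rewrite /eta_sum big_ord_recr.
have He1 := He T.+1.
set t := S1 / (S1 + eta T.+1).
have Ew : wavg eta x T.+2 = (fun i => t * wavg eta x T.+1 i + (1 - t) * x T.+2 i).
  apply functional_extensionality => i; rewrite /wavg ES2 /t big_ord_recr /=.
  rewrite -/S1; field; lra.
have Ht : 0 <= t <= 1.
  rewrite /t; split; first by apply Rmult_le_pos; [lra|apply Rlt_le, Rinv_0_lt_compat; lra].
  apply Rmult_le_reg_r with (S1 + eta T.+1); first lra.
  rewrite /Rdiv Rmult_assoc Rinv_l; lra.
have Hc := Cf (wavg eta x T.+1) (x T.+2) t Ht.
rewrite -Ew in Hc.
rewrite big_ord_recr /= ES2.
have E1 : (S1 + eta T.+1) * t = S1 by rewrite /t; field; lra.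
have E2 : (S1 + eta T.+1) * (1 - t) = eta T.+1 by rewrite /t; field; lra.
have Hp : 0 <= S1 + eta T.+1 by lra.
apply: Rle_trans (Rmult_le_compat_l _ _ _ Hp Hc) _.
have -> : (S1 + eta T.+1) * (t * f (wavg eta x T.+1) + (1 - t) * f (x T.+2))
  = ((S1 + eta T.+1) * t) * f (wavg eta x T.+1) + ((S1 + eta T.+1) * (1 - t)) * f (x T.+2) by ring.
rewrite E1 E2.
apply Rplus_le_compat_r; exact IH.
Qed.
Lemma lam_in m n ineq (f : vec n -> R) X (A : mat m n) b (h : vec m -> R) gh
  (eta : nat -> R) (x : nat -> vec n) (lam : nat -> vec m) :
  Lambda ineq (lam 0%nat) ->
  (forall k, BALM_step ineq f X A b h gh (eta k) (lam k) (x k.+1) (lam k.+1)) ->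
  forall k, Lambda ineq (lam k).
Proof. move=> H0 Hs [|k] //; by case: (Hs k) => _ []. Qed.

Lemma tele m n ineq (f : vec n -> R) X (A : mat m n) b (h : vec m -> R) gh
  (eta : nat -> R) (x : nat -> vec n) (lam : nat -> vec m) xx l :
  strictly_convex_on (Lambda ineq) h -> gradient_on (Lambda ineq) h gh ->
  (forall k, 0 < eta k) ->
  Lambda ineq (lam 0%nat) ->
  (forall k, BALM_step ineq f X A b h gh (eta k) (lam k) (x k.+1) (lam k.+1)) ->
  X xx -> Lambda ineq l ->
  forall T, \big[Rplus/0]_(k<T) (eta k * (Lag f A b (x k.+1) l - Lag f A b xx (lam k.+1)))
    <= Dh h gh l (lam 0%nat) - Dh h gh l (lam T).
Proof.
move=> SC G He H0 Hs Hxx Hl; elim => [|T IH].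
  rewrite big_ord0; lra.
rewrite big_ord_recr /=.
have := step_ineq SC G (He T) (lam_in H0 Hs T) (Hs T) Hxx Hl.
move=> H; apply: Rle_trans (Rplus_le_compat _ _ _ _ IH H) _; lra.
Qed.

Lemma dot_wavg_l p (u : vec p) eta (z : nat -> vec p) T :
  dot (wavg eta z T) u = (\big[Rplus/0]_(k<T) (eta k * dot (z k.+1) u)) / eta_sum eta T.
Proof.
rewrite dot_comm dot_wavg; congr (_ / _); apply eq_bigr => k _; by rewrite dot_comm.
Qed.

Theorem lemma3 (m n : nat) (ineq : bool) (f : vec n -> R) (X : vec n -> Prop)
  (A : mat m n) (b : vec m) (h : vec m -> R) (gh : vec m -> vec m)
  (eta : nat -> R) (x : nat -> vec n) (lam : nat -> vec m) (T : nat) :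
  convex_fun f -> lsc_fun f -> coercive_on (fun _ => True) f ->
  vconvex_set X -> vclosed_set X ->
  strictly_convex_on (Lambda ineq) h -> coercive_on (Lambda ineq) h ->
  gradient_on (Lambda ineq) h gh -> vcontinuous_on (Lambda ineq) gh ->
  (forall k, 0 < eta k) ->
  Lambda ineq (lam 0%nat) ->
  (forall k, BALM_step ineq f X A b h gh (eta k) (lam k) (x k.+1) (lam k.+1)) ->
  (1 <= T)%nat ->
  (forall xx l, X xx -> Lambda ineq l ->
     Lag f A b (wavg eta x T) l - Lag f A b xx (wavg eta lam T)
       <= Dh h gh l (lam 0%nat) / eta_sum eta T) /\
  (forall xs, primal_optimal ineq f X A b xs -> forall l, Lambda ineq l ->
     f (wavg eta x T) - f xs + dot l (vsub (mulv A (wavg eta x T)) b)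
       <= Dh h gh l (lam 0%nat) / eta_sum eta T).
Proof.
move=> Cf _ _ _ _ SC _ G _ He H0 Hs HT.
have Sp : 0 < eta_sum eta T by apply: eta_sum_pos.
have Sn : eta_sum eta T <> 0 by lra.
have P1 : forall xx l, X xx -> Lambda ineq l ->
     Lag f A b (wavg eta x T) l - Lag f A b xx (wavg eta lam T)
       <= Dh h gh l (lam 0%nat) / eta_sum eta T.
  move=> xx l Hxx Hl.
  set S := eta_sum eta T in Sp Sn *.
  apply Rmult_le_reg_l with S => //.
  have -> : S * (Dh h gh l (lam 0%nat) / S) = Dh h gh l (lam 0%nat) by field.
  have Htele := tele SC G He H0 Hs Hxx Hl T.
  have HD := Dh_ge0 SC G (lam_in H0 Hs T) Hl.
  have J := jensen x Cf He HT.
  rewrite -/S in J.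
  set d := vsub (mulv A xx) b.
  have E : \big[Rplus/0]_(k<T) (eta k * (Lag f A b (x k.+1) l - Lag f A b xx (lam k.+1)))
     = \big[Rplus/0]_(k<T) (eta k * f (x k.+1))
       + \big[Rplus/0]_(k<T) (eta k * dot l (vsub (mulv A (x k.+1)) b))
       - S * f xx - \big[Rplus/0]_(k<T) (eta k * dot (lam k.+1) d).
    rewrite (eq_bigr (fun k : 'I_T => (eta k * f (x k.+1) + eta k * dot l (vsub (mulv A (x k.+1)) b))
                  - (f xx * eta k + eta k * dot (lam k.+1) d))); last first.
      by move=> k _; rewrite /Lag /d; ring.
    rewrite sumB !big_split /= -big_distrr /= /S /eta_sum.
    set s1 := \big[Rplus/0]_(k<T) (eta k * f (x k.+1)).
    set s2 := \big[Rplus/0]_(k<T) (eta k * dot l (vsub (mulv A (x k.+1)) b)).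
    set s3 := \big[Rplus/0]_(k<T) eta k.
    set s4 := \big[Rplus/0]_(k<T) (eta k * dot (lam k.+1) d).
    ring.
  rewrite E in Htele.
  rewrite /Lag mulv_wavg // dot_wavg dot_wavg_l -/d.
  have -> : S * (f (wavg eta x T) +
     \big[Rplus/0]_(k < T) (eta k * dot l (vsub (mulv A (x k.+1)) b)) / S -
     (f xx + \big[Rplus/0]_(k < T) (eta k * dot (lam k.+1) d) / S))
     = S * f (wavg eta x T) + \big[Rplus/0]_(k < T) (eta k * dot l (vsub (mulv A (x k.+1)) b))
       - S * f xx - \big[Rplus/0]_(k < T) (eta k * dot (lam k.+1) d) by field.
  lra.
split => // xs [HXs [Hfe _]] l Hl.
have := P1 xs l HXs Hl.
rewrite /Lag.
suff : dot (wavg eta lam T) (vsub (mulv A xs) b) <= 0 by lra.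
have Lw : Lambda ineq (wavg eta lam T).
  move: (lam_in H0 Hs); rewrite /Lambda /wavg; clear -Sp He; case: ineq => // Hl i.
  apply Rmult_le_pos; last by apply Rlt_le, Rinv_0_lt_compat.
  have := @sum_le T (fun _ => 0) (fun k => eta k * lam k.+1 i).
  rewrite big1 //; apply => k.
  apply Rmult_le_pos; [apply Rlt_le, He | apply Hl].
have := @sum_le m (fun i => wavg eta lam T i * vsub (mulv A xs) b i) (fun _ => 0).
move=> H; suff Hi : forall i, wavg eta lam T i * vsub (mulv A xs) b i <= 0.
  have := H Hi; rewrite [X in _ <= X]big1 //.
move=> i.
move: Hfe Lw; rewrite /feasible /Lambda /vsub; clear -Sp; case: ineq => Hfe Lw.
  have := Lw i; have := Hfe i; nra.
rewrite (Hfe i); lra.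
Qed.
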